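(* Let $\alpha>0$ and $t>2\pi$, and put $\tau=t/2\pi$. Then \[ S(\tau^\alpha,t)\le 2A\bigl(\tau^{1/2}+2\tau^{\alpha-1/2}\bigr), \] where $A=\frac{2}{\sqrt\pi}(1+\sqrt{1+3\pi/8})$.
   Context: $e(x)=e^{2\pi i x}$, $f(x)=\frac{t}{2\pi}\log x$, and for $X>0$, $S(X,t)=\sup_{0<Y\le X}\bigl|\sum_{X<n\le X+Y}e(f(n))\bigr|$ (sum over integers $n$). *)

(* Defs.v *)
From Stdlib Require Import Reals Lra Lia ZArith List.
Open Scope R_scope.

(* f(x) = (t / (2 pi)) log x, and e(x) = exp(2 pi i x) split into real and
   imaginary parts: e(f(n)) = cos(2 pi f(n)) + i sin(2 pi f(n)). *)
Definition fphase (t x : R) : R := t / (2 * PI) * ln x.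

(* The integers n with X < n <= X + Y are exactly
   n = floor(X) + 1 + k, for 0 <= k < floor(X+Y) - floor(X). *)
Definition Zfloor (x : R) : Z := (up x - 1)%Z.

Definition int_range (X Y : R) : list Z :=
  map (fun k => (Zfloor X + 1 + Z.of_nat k)%Z)
      (seq 0 (Z.to_nat (Zfloor (X + Y) - Zfloor X))).

Definition re_sum (t X Y : R) : R :=
  fold_right Rplus 0
    (map (fun n => cos (2 * PI * fphase t (IZR n))) (int_range X Y)).
Definition im_sum (t X Y : R) : R :=
  fold_right Rplus 0
    (map (fun n => sin (2 * PI * fphase t (IZR n))) (int_range X Y)).

Definition abs_exp_sum (t X Y : R) : R :=
  sqrt (Rsqr (re_sum t X Y) + Rsqr (im_sum t X Y)).

(* S(X,t) = sup_{0 < Y <= X} abs_exp_sum t X Y  (as a least upper bound;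
   the set is bounded by the number of terms, so the sup exists). *)
Definition S_set (X t : R) : R -> Prop :=
  fun s => exists Y, 0 < Y <= X /\ s = abs_exp_sum t X Y.

Definition A_const : R := 2 / sqrt PI * (1 + sqrt (1 + 3 * PI / 8)).

(* Main.v *)
Require Import Defs.
From Stdlib Require Import Reals Lra Lia List ZArith.
From Coquelicot Require Import Coquelicot.
Open Scope R_scope.

Definition ee (x : R) : Complex.C := (cos (2*PI*x), sin (2*PI*x)).

Lemma Cmod_ee x : Cmod (ee x) = 1.
Proof. unfold Cmod, ee; simpl. pose proof (sin2_cos2 (2*PI*x)). unfold Rsqr in H.
  replace (cos (2 * PI * x) * (cos (2 * PI * x) * 1) + sin (2 * PI * x) * (sin (2 * PI * x) * 1)) with 1 by lra. apply sqrt_1. Qed.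

Lemma ee_add x y : ee (x + y) = Cmult (ee x) (ee y).
Proof.
  unfold ee, Cmult; simpl. replace (2*PI*(x+y)) with (2*PI*x + 2*PI*y) by ring.
  rewrite cos_plus, sin_plus. f_equal; ring.
Qed.

Fixpoint csum (f : nat -> Complex.C) (n : nat) : Complex.C :=
  match n with O => RtoC 0 | S n => Cplus (csum f n) (f n) end.

Lemma Cmod_csum_le f n : (forall i, (i < n)%nat -> Cmod (f i) <= 1) -> Cmod (csum f n) <= INR n.
Proof.
  induction n; intros H; cbn [csum].
  - rewrite Cmod_0. simpl; lra.
  - eapply Rle_trans. apply Cmod_triangle. rewrite S_INR.
    assert (Cmod (csum f n) <= INR n) by (apply IHn; intros; apply H; lia).
    assert (Cmod (f n) <= 1) by (apply H; lia). lra.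
Qed.

Definition th (g : nat -> R) i := g (S i) - g i.
Definition kap (t : R) := cos (PI*t) / sin (PI*t).
Definition cc (t : R) : Complex.C := (-1/2, - kap t / 2).

Lemma cc_mul t : sin (PI*t) <> 0 -> Cmult (cc t) (Cminus (ee t) (RtoC 1)) = RtoC 1.
Proof.
  intros Hs. unfold cc, ee, kap, Cmult, Cminus, Cplus, Copp, RtoC; simpl.
  replace (2*PI*t) with (2*(PI*t)) by ring. rewrite cos_2a_sin, sin_2a.
  pose proof (sin2_cos2 (PI*t)). unfold Rsqr in *.
  f_equal; field_simplify; try lra; auto.
Qed.
Lemma sin_th_lb d t : 0 < d <= 1/2 -> d <= t <= 1 - d -> sin (PI*d) <= sin (PI*t).
Proof.
  intros Hd Ht. pose proof PI_RGT_0.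
  destruct (Rle_dec t (1/2)).
  - apply sin_incr_1; nra.
  - rewrite <- (sin_PI_x (PI*t)). apply sin_incr_1; nra.
Qed.

Lemma sin_pos_d d : 0 < d <= 1/2 -> 0 < sin (PI*d).
Proof. intros. pose proof PI_RGT_0. apply sin_gt_0; nra. Qed.

Lemma Cmod_cc t : 0 < sin (PI*t) -> Cmod (cc t) = 1 / (2 * sin (PI*t)).
Proof.
  intros Hs. unfold Cmod, cc, kap; simpl.
  pose proof (sin2_cos2 (PI*t)). unfold Rsqr in H.
  replace (-1 / 2 * (-1 / 2 * 1) + - (cos (PI * t) / sin (PI * t)) / 2 * (- (cos (PI * t) / sin (PI * t)) / 2 * 1))
    with ((1 / (2 * sin (PI*t)))^2).
  - apply sqrt_pow2. left. apply Rdiv_lt_0_compat; lra.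
  - field_simplify; try lra. rewrite <- H. field. lra.
Qed.

Lemma kap_mono d a b : 0 < d <= 1/2 -> d <= b -> b <= a -> a <= 1 - d -> kap a <= kap b.
Proof.
  intros Hd Hb Hab Ha. pose proof PI_RGT_0.
  assert (sa : 0 < sin (PI*a)) by (pose proof (sin_th_lb d a Hd); pose proof (sin_pos_d d Hd); lra).
  assert (sb : 0 < sin (PI*b)) by (pose proof (sin_th_lb d b Hd); pose proof (sin_pos_d d Hd); lra).
  assert (kap b - kap a = sin (PI*a - PI*b) / (sin (PI*a) * sin (PI*b))).
  { unfold kap. rewrite sin_minus. field. lra. }
  assert (0 <= sin (PI*a - PI*b)) by (apply sin_ge_0; nra).
  assert (0 <= sin (PI*a - PI*b) / (sin (PI*a) * sin (PI*b))).
  { apply Rdiv_le_0_compat; nra. }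
  lra.
Qed.

Lemma kap_bound d t : 0 < d <= 1/2 -> d <= t <= 1 - d -> Rabs (kap t) <= 1 / sin (PI*d).
Proof.
  intros Hd Ht. pose proof (sin_th_lb d t Hd Ht). pose proof (sin_pos_d d Hd).
  unfold kap. rewrite Rabs_div by lra. rewrite (Rabs_right (sin _)) by lra.
  pose proof (COS_bound (PI*t)). apply Rle_trans with (1 / sin (PI*t)).
  - unfold Rdiv. apply Rmult_le_compat_r. left; apply Rinv_0_lt_compat; lra.
    apply Rabs_le; lra.
  - unfold Rdiv. rewrite !Rmult_1_l. apply Rinv_le_contravar; lra.
Qed.

Lemma Cmod_cc_diff a b : Cmod (Cminus (cc a) (cc b)) = Rabs (kap a - kap b) / 2.
Proof.
  unfold Cmod, cc, Cminus, Cplus, Copp; simpl.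
  replace ((-1 / 2 + - (-1 / 2)) * ((-1 / 2 + - (-1 / 2)) * 1) + (- kap a / 2 + - (- kap b / 2)) * ((- kap a / 2 + - (- kap b / 2)) * 1))
    with (Rsqr ((kap a - kap b)/2)) by (unfold Rsqr; field).
  rewrite sqrt_Rsqr_abs. unfold Rdiv. rewrite Rabs_mult. rewrite (Rabs_right (/2)) by lra. ring.
Qed.
Lemma U_rec g i : sin (PI * th g i) <> 0 ->
  ee (g i) = Cmult (cc (th g i)) (Cminus (ee (g (S i))) (ee (g i))).
Proof.
  intros Hs. replace (g (S i)) with (g i + th g i) by (unfold th; ring).
  rewrite ee_add. pose proof (cc_mul _ Hs).
  transitivity (Cmult (ee (g i)) (Cmult (cc (th g i)) (Cminus (ee (th g i)) (RtoC 1)))).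
  - rewrite H. ring.
  - ring.
Qed.

Lemma KL_core (g : nat -> R) (d : R) (m : nat) : 0 < d <= 1/2 ->
  (forall i, (i < m)%nat -> d <= th g i <= 1 - d) ->
  (forall i, (S i < m)%nat -> th g (S i) <= th g i) ->
  Cmod (csum (fun i => ee (g i)) m) <= 2 / sin (PI*d).
Proof.
  intros Hd Hr Hm. set (s := sin (PI*d)). assert (Hs : 0 < s) by (apply sin_pos_d; auto).
  set (U := fun i => ee (g i)).
  assert (HUn : forall i, Cmod (U i) = 1) by (intros; apply Cmod_ee).
  assert (Hsi : forall i, (i < m)%nat -> s <= sin (PI * th g i)).
  { intros i Hi. apply sin_th_lb; auto. }
  assert (HU : forall i, (i < m)%nat -> U i = Cmult (cc (th g i)) (Cminus (U (S i)) (U i))).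
  { intros i Hi. apply U_rec. specialize (Hsi i Hi). lra. }
  assert (Hcc : forall i, (i < m)%nat -> Cmod (cc (th g i)) <= 1 / (2*s)).
  { intros i Hi. rewrite Cmod_cc by (specialize (Hsi i Hi); lra).
    unfold Rdiv. rewrite !Rmult_1_l. apply Rinv_le_contravar. lra. specialize (Hsi i Hi); lra. }
  assert (Inv : forall n, (S n <= m)%nat ->
     Cmod (Cminus (csum U (S n)) (Cmult (cc (th g n)) (U (S n)))) <= 1/(2*s) + (kap (th g n) - kap (th g 0))/2).
  { induction n; intros Hn.
    - cbn [csum]. 
      replace (Cminus (Cplus (RtoC 0) (U 0%nat)) (Cmult (cc (th g 0)) (U 1%nat)))
        with (Copp (Cmult (cc (th g 0)) (U 0%nat))).
      + rewrite Cmod_opp, Cmod_mult. rewrite HUn.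
        specialize (Hcc 0%nat ltac:(lia)). lra.
      + rewrite (HU 0%nat) at 2 by lia. ring.
    - change (csum U (S (S n))) with (Cplus (csum U (S n)) (U (S n))).
      replace (Cminus (Cplus (csum U (S n)) (U (S n))) (Cmult (cc (th g (S n))) (U (S (S n)))))
        with (Cplus (Cminus (csum U (S n)) (Cmult (cc (th g n)) (U (S n))))
                    (Cmult (Cminus (cc (th g n)) (cc (th g (S n)))) (U (S n)))).
      + eapply Rle_trans. apply (Cmod_triangle (Cminus (csum U (S n)) (Cmult (cc (th g n)) (U (S n))))).
        rewrite Cmod_mult, HUn, Cmod_cc_diff. specialize (IHn ltac:(lia)).
        assert (kap (th g n) <= kap (th g (S n))).
        { pose proof (Hr n ltac:(lia)). pose proof (Hr (S n) ltac:(lia)). pose proof (Hm n ltac:(lia)).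
          apply (kap_mono d); lra. }
        rewrite Rabs_left1 by lra. lra.
      + pose proof (HU (S n) ltac:(lia)) as E.
        transitivity (Cplus (csum U (S n)) (Cminus (Cmult (cc (th g (S n))) (Cminus (U (S (S n))) (U (S n)))) (Cmult (cc (th g (S n))) (U (S (S n)))))).
        * ring.
        * rewrite <- E. ring. }
  destruct m as [|n].
  - cbn [csum]. rewrite Cmod_0. unfold Rdiv. apply Rmult_le_pos; [lra| left; apply Rinv_0_lt_compat; auto].
  - specialize (Inv n ltac:(lia)).
    replace (csum U (S n)) with (Cplus (Cminus (csum U (S n)) (Cmult (cc (th g n)) (U (S n)))) (Cmult (cc (th g n)) (U (S n)))) by ring.
    eapply Rle_trans. apply (Cmod_triangle (Cminus (csum U (S n)) (Cmult (cc (th g n)) (U (S n))))). rewrite Cmod_mult, HUn.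
    pose proof (Hcc n ltac:(lia)).
    pose proof (kap_bound d (th g n) Hd (Hr n ltac:(lia))).
    pose proof (kap_bound d (th g 0) Hd (Hr 0%nat ltac:(lia))).
    apply Rabs_le_between in H0. apply Rabs_le_between in H1.
    fold s in H0, H1.
    assert (1/(2*s) = (1/s)/2) by (field; lra).
    assert (2/s = 2 * (1/s)) by (field; lra). lra.
Qed.
Lemma ee_int x z : ee (x + IZR z) = ee x.
Proof.
  rewrite ee_add.
  assert (Hs : sin (PI * IZR z) = 0) by (apply sin_eq_0_1; exists z; ring).
  assert (ee (IZR z) = RtoC 1).
  { unfold ee, RtoC. replace (2*PI*IZR z) with (2*(PI*IZR z)) by ring.
    rewrite cos_2a_sin, sin_2a, Hs. f_equal; ring. }
  rewrite H. ring.
Qed.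

Definition Ssum (g : nat -> R) p m := csum (fun i => ee (g (p + i)%nat)) m.

Lemma csum_ext f h m : (forall i, (i < m)%nat -> f i = h i) -> csum f m = csum h m.
Proof.
  induction m; intros H; cbn [csum]; auto. rewrite IHm by (intros; apply H; lia). rewrite H by lia. auto.
Qed.

Lemma Ssum_split g p m1 m2 : Ssum g p (m1 + m2) = Cplus (Ssum g p m1) (Ssum g (p + m1) m2).
Proof.
  unfold Ssum. induction m2.
  - rewrite Nat.add_0_r. cbn [csum]. ring.
  - rewrite Nat.add_succ_r. cbn [csum]. rewrite IHm2. replace (p + (m1 + m2))%nat with (p + m1 + m2)%nat by lia. ring.
Qed.

Lemma Ssum_triv g p m : Cmod (Ssum g p m) <= INR m.
Proof. apply Cmod_csum_le. intros. rewrite Cmod_ee. lra. Qed.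

Lemma KL_shift g p m d (k : Z) : 0 < d <= 1/2 ->
  (forall i, (i < m)%nat -> IZR k + d <= th g (p + i) <= IZR k + 1 - d) ->
  (forall i, (S i < m)%nat -> th g (p + S i) <= th g (p + i)) ->
  Cmod (Ssum g p m) <= 2 / sin (PI*d).
Proof.
  intros Hd Hr Hm.
  set (g' := fun i => g (p + i)%nat - IZR (k * Z.of_nat (p + i))).
  assert (E : Ssum g p m = csum (fun i => ee (g' i)) m).
  { unfold Ssum. apply csum_ext. intros i _. unfold g'. unfold Rminus. rewrite <- opp_IZR. rewrite ee_int. auto. }
  assert (Th : forall i, th g' i = th g (p + i) - IZR k).
  { intros i. unfold th, g'. rewrite !mult_IZR, <- !INR_IZR_INZ. rewrite Nat.add_succ_r, S_INR. ring. }
  rewrite E. apply KL_core; auto.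
  - intros i Hi. rewrite Th. specialize (Hr i Hi). lra.
  - intros i Hi. rewrite !Th. specialize (Hm i Hi). lra.
Qed.

Lemma prefix (P : nat -> Prop) (Pdec : forall i, {P i} + {~ P i}) m :
  exists m1, (m1 <= m)%nat /\ (forall i, (i < m1)%nat -> P i) /\ ((m1 < m)%nat -> ~ P m1).
Proof.
  induction m.
  - exists 0%nat. split; [lia|split]; intros; lia.
  - destruct IHm as [m1 [H1 [H2 H3]]].
    destruct (Nat.eq_dec m1 m) as [->|Hne].
    + destruct (Pdec m).
      * exists (S m). split; [lia|split]. intros i Hi. destruct (Nat.eq_dec i m) as [->|]; auto. apply H2; lia. intros; lia.
      * exists m. split; [lia|split]; auto.
    + exists m1. split; [lia|split]; auto. intros; apply H3; lia.
Qed.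

Lemma Zfloor_spec x : IZR (Defs.Zfloor x) <= x < IZR (Defs.Zfloor x) + 1.
Proof.
  unfold Defs.Zfloor. rewrite minus_IZR. destruct (archimed x). lra.
Qed.

Lemma Zfloor_mono x y : x <= y -> (Defs.Zfloor x <= Defs.Zfloor y)%Z.
Proof.
  intros. pose proof (Zfloor_spec x). pose proof (Zfloor_spec y).
  assert (IZR (Defs.Zfloor x) < IZR (Defs.Zfloor y) + 1) by lra.
  rewrite <- plus_IZR in H2. apply lt_IZR in H2. lia.
Qed.

Lemma Zfloor_lt x (k : Z) : x < IZR k -> (Defs.Zfloor x <= k - 1)%Z.
Proof.
  intros. pose proof (Zfloor_spec x).
  assert (IZR (Defs.Zfloor x) < IZR k) by lra. apply lt_IZR in H1. lia.
Qed.

Section Blocks.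
Variables (g : nat -> R) (M : nat) (lam d : R).
Hypothesis Hlam : 0 < lam.
Hypothesis Hd : 0 < d <= 1/2.
Hypothesis Hdec : forall i, (S i < M)%nat -> th g i - th g (S i) >= lam.

Lemma drop_n p n : (p + n < M)%nat -> th g p - th g (p + n) >= INR n * lam.
Proof.
  induction n; intros H.
  - rewrite Nat.add_0_r. simpl. lra.
  - specialize (IHn ltac:(lia)). specialize (Hdec (p + n) ltac:(lia)).
    rewrite Nat.add_succ_r, S_INR. lra.
Qed.

Lemma th_mono i j : (i <= j)%nat -> (j < M)%nat -> th g j <= th g i.
Proof.
  intros. replace j with (i + (j - i))%nat by lia. pose proof (drop_n i (j - i) ltac:(lia)).
  pose proof (pos_INR (j - i)). nra.
Qed.

Definition Bc := 2 * d / lam + 1 + 2 / sin (PI * d).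

Lemma Bc_pos : 0 <= Bc.
Proof.
  unfold Bc. pose proof (sin_pos_d d Hd).
  assert (0 <= 2 * d / lam) by (apply Rdiv_le_0_compat; lra).
  assert (0 <= 2 / sin (PI*d)) by (apply Rdiv_le_0_compat; lra). lra.
Qed.

Lemma near p m (k : Z) : (p + m <= M)%nat ->
  (forall i, (i < m)%nat -> IZR k - d <= th g (p + i) < IZR k + d) ->
  INR m <= 2 * d / lam + 1.
Proof.
  intros Hpm H. destruct m as [|n].
  - simpl. assert (0 <= 2 * d / lam) by (apply Rdiv_le_0_compat; lra). lra.
  - pose proof (drop_n p n ltac:(lia)). pose proof (H 0%nat ltac:(lia)). pose proof (H n ltac:(lia)).
    rewrite Nat.add_0_r in H1. rewrite S_INR.
    assert (INR n * lam < 2 * d) by lra.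
    assert (INR n <= 2 * d / lam).
    { apply Rmult_le_reg_r with lam; auto. unfold Rdiv. rewrite Rmult_assoc, Rinv_l by lra. lra. }
    lra.
Qed.

Lemma block p m (k : Z) : (p + m <= M)%nat ->
  (forall i, (i < m)%nat -> IZR k - d <= th g (p + i) < IZR k + 1 - d) ->
  Cmod (Ssum g p m) <= Bc.
Proof.
  intros Hpm H.
  destruct (prefix (fun i => IZR k + d <= th g (p + i)) (fun i => Rle_dec _ _) m) as [m1 [H1 [H2 H3]]].
  replace m with (m1 + (m - m1))%nat by lia. rewrite Ssum_split.
  eapply Rle_trans. apply Cmod_triangle.
  assert (A1 : Cmod (Ssum g p m1) <= 2 / sin (PI * d)).
  { apply (KL_shift g p m1 d k Hd).
    - intros i Hi. split. apply H2; auto. specialize (H i ltac:(lia)). lra.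
    - intros i Hi. rewrite Nat.add_succ_r. apply th_mono; lia. }
  assert (A2 : Cmod (Ssum g (p + m1) (m - m1)) <= 2 * d / lam + 1).
  { eapply Rle_trans. apply Ssum_triv. apply (near (p + m1) (m - m1) k). lia.
    intros i Hi. specialize (H (m1 + i)%nat ltac:(lia)). rewrite Nat.add_assoc in H.
    split. lra.
    assert (th g (p + m1 + i) <= th g (p + m1)) by (apply th_mono; lia).
    assert (~ (IZR k + d <= th g (p + m1))) by (apply H3; lia). lra. }
  unfold Bc. lra.
Qed.

Definition Fl j := Defs.Zfloor (th g j + d).

Lemma main_blocks m : forall p, (p + m <= M)%nat -> (1 <= m)%nat ->
  Cmod (Ssum g p m) <= (IZR (Fl p) - IZR (Fl (p + m - 1)) + 1) * Bc.
Proof.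
  induction m as [m IH] using (well_founded_induction Wf_nat.lt_wf). intros p Hpm Hm.
  set (k := Fl p). pose proof (Zfloor_spec (th g p + d)) as Hk. fold (Fl p) in Hk. fold k in Hk.
  pose proof Bc_pos as HB.
  assert (Fmono : forall i j, (i <= j)%nat -> (j < M)%nat -> IZR (Fl j) <= IZR (Fl i)).
  { intros i j Hij HjM. apply IZR_le. apply Zfloor_mono. pose proof (th_mono i j Hij HjM). lra. }
  destruct (prefix (fun i => IZR k - d <= th g (p + i)) (fun i => Rle_dec _ _) m) as [m1 [H1 [H2 H3]]].
  assert (Blk : Cmod (Ssum g p m1) <= Bc).
  { apply (block p m1 k). lia. intros i Hi. split. apply H2; auto.
    assert (th g (p + i) <= th g p). { apply th_mono; lia. } lra. }
  destruct (Nat.eq_dec m1 m) as [->|Hne].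
  - pose proof (Fmono p (p + m - 1)%nat ltac:(lia) ltac:(lia)). fold k in H. nra.
  - assert (Hm1 : (1 <= m1)%nat).
    { destruct m1. exfalso. apply (H3 ltac:(lia)). rewrite Nat.add_0_r. lra. lia. }
    replace m with (m1 + (m - m1))%nat by lia. rewrite Ssum_split.
    eapply Rle_trans. apply Cmod_triangle.
    specialize (IH (m - m1)%nat ltac:(lia) (p + m1)%nat ltac:(lia) ltac:(lia)).
    replace (p + m1 + (m - m1) - 1)%nat with (p + (m1 + (m - m1)) - 1)%nat in IH by lia.
    assert (IZR (Fl (p + m1)) <= IZR k - 1).
    { rewrite <- minus_IZR. apply IZR_le. apply Zfloor_lt. assert (~ (IZR k - d <= th g (p + m1))) by (apply H3; lia). lra. }
    nra.
Qed.

Lemma main_bound m : (m <= M)%nat -> (1 <= m)%nat ->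
  Cmod (Ssum g 0 m) <= (th g 0 - th g (m - 1) + 2) * Bc.
Proof.
  intros. eapply Rle_trans. apply main_blocks; [simpl; lia | lia].
  pose proof Bc_pos. apply Rmult_le_compat_r; auto.
  pose proof (Zfloor_spec (th g 0 + d)). pose proof (Zfloor_spec (th g (m - 1) + d)).
  unfold Fl. simpl. lra.
Qed.
End Blocks.
Lemma PI_ub : PI <= 3.15.
Proof.
  destruct (PI_2_3_7_ineq 1) as [_ H].
  unfold sum_f_R0, tg_alt, PI_2_3_7_tg, Ratan_seq in H. simpl in H. lra.
Qed.
Lemma PI_lb : 3.14 <= PI.
Proof.
  destruct (PI_2_3_7_ineq 1) as [H _].
  unfold sum_f_R0, tg_alt, PI_2_3_7_tg, Ratan_seq in H. simpl in H. lra.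
Qed.
Lemma ln_le_xm1 x : 0 < x -> ln x <= x - 1.
Proof. intros. pose proof (exp_ineq1_le (ln x)). rewrite exp_ln in H0 by auto. lra. Qed.

Lemma ln_diff_ub n : 0 < n -> ln (n + 1) - ln n <= 1 / n.
Proof.
  intros. rewrite <- ln_div by lra. pose proof (ln_le_xm1 ((n+1)/n) ltac:(apply Rdiv_lt_0_compat; lra)).
  replace ((n + 1) / n - 1) with (1/n) in H0 by (field; lra). auto.
Qed.

Lemma ln_diff_lb n : 0 < n -> 1 / (n + 1) <= ln (n + 1) - ln n.
Proof.
  intros. pose proof (ln_le_xm1 (n/(n+1)) ltac:(apply Rdiv_lt_0_compat; lra)).
  rewrite ln_div in H0 by lra.
  replace (n / (n + 1) - 1) with (- (1/(n+1))) in H0 by (field; lra). lra.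
Qed.

Lemma ln_diff2 n : 0 < n -> 1 / ((n+1)*(n+1)) <= 2 * ln (n + 1) - ln n - ln (n + 2).
Proof.
  intros. assert (0 < n * (n+2) / ((n+1)*(n+1))) by (apply Rdiv_lt_0_compat; nra).
  pose proof (ln_le_xm1 _ H0).
  rewrite ln_div, !ln_mult in H1 by nra.
  replace (n * (n + 2) / ((n + 1) * (n + 1)) - 1) with (- (1/((n+1)*(n+1)))) in H1 by (field; lra). lra.
Qed.

Lemma sin_bound_d d : 0 < d <= 0.2 -> 2 / sin (PI * d) <= 0.75 / d.
Proof.
  intros Hd. pose proof PI_ub. pose proof PI_lb.
  set (a := PI * d).
  assert (Ha : 0 < a <= 0.63) by (unfold a; nra).
  destruct (SIN a ltac:(lra) ltac:(lra)) as [Hl _].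
  unfold sin_lb, sin_approx, sum_f_R0, sin_term in Hl. simpl in Hl.
  assert (a - a^3/6 <= sin a).
  { assert (0 <= a^5/120 - a^7/5040).
    { replace (a^5/120 - a^7/5040) with (a^5 * (1/120 - a^2/5040)) by field.
      apply Rmult_le_pos. apply pow_le; lra. simpl; nra. }
    eapply Rle_trans; [|apply Hl]. simpl in *. lra. }
  assert (a^3/6 <= a * 0.07) by (simpl; nra).
  assert (2.9 * d <= sin a) by (unfold a in *; nra).
  apply Rle_trans with (2 / (2.9 * d)).
  - unfold Rdiv. apply Rmult_le_compat_l. lra. apply Rinv_le_contravar; nra.
  - unfold Rdiv. rewrite Rinv_mult. assert (0 < / d) by (apply Rinv_0_lt_compat; lra).
    assert (/ 2.9 <= 0.375) by (apply Rmult_le_reg_l with 2.9; [lra| rewrite Rinv_r; lra]). nra.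
Qed.
Lemma fold_shift a l : fold_right Rplus a l = fold_right Rplus 0 l + a.
Proof. induction l; simpl; [ring| rewrite IHl; ring]. Qed.

Lemma fold_csum_fst (f : nat -> Complex.C) N :
  fold_right Rplus 0 (map (fun j => fst (f j)) (seq 0 N)) = fst (csum f N).
Proof.
  induction N; auto. rewrite seq_S, map_app, fold_right_app. simpl.
  rewrite fold_shift, IHN. ring.
Qed.

Lemma fold_csum_snd (f : nat -> Complex.C) N :
  fold_right Rplus 0 (map (fun j => snd (f j)) (seq 0 N)) = snd (csum f N).
Proof.
  induction N; auto. rewrite seq_S, map_app, fold_right_app. simpl.
  rewrite fold_shift, IHN. ring.
Qed.

Lemma sum_link t X Y :
  abs_exp_sum t X Y = Cmod (Ssum (fun j => t / (2*PI) * ln (IZR (Defs.Zfloor X + 1) + INR j)) 0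
                              (Z.to_nat (Defs.Zfloor (X+Y) - Defs.Zfloor X))).
Proof.
  unfold abs_exp_sum, re_sum, im_sum, int_range, Ssum, Cmod. rewrite !map_map.
  rewrite (map_ext _ (fun j => fst ((fun i => ee (t / (2*PI) * ln (IZR (Defs.Zfloor X + 1) + INR (0 + i)))) j))).
  rewrite (map_ext (fun x => sin _) (fun j => snd ((fun i => ee (t / (2*PI) * ln (IZR (Defs.Zfloor X + 1) + INR (0 + i)))) j))).
  - rewrite fold_csum_fst, fold_csum_snd. unfold Rsqr. f_equal. simpl. ring.
  - intros a. unfold ee, fphase. simpl. rewrite plus_IZR, <- INR_IZR_INZ. reflexivity.
  - intros a. unfold ee, fphase. simpl. rewrite plus_IZR, <- INR_IZR_INZ. reflexivity.
Qed.
Lemma A_lb : 5.4 <= 2 * A_const.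
Proof.
  unfold A_const. pose proof PI_ub. pose proof PI_lb.
  assert (sqrt PI <= 1.8).
  { rewrite <- (sqrt_square 1.8) by lra. apply sqrt_le_1; lra. }
  assert (0 < sqrt PI) by (apply sqrt_lt_R0; lra).
  assert (1.45 <= sqrt (1 + 3 * PI / 8)).
  { rewrite <- (sqrt_square 1.45) by lra. apply sqrt_le_1; lra. }
  assert (2 / sqrt PI >= 2 / 1.8).
  { unfold Rdiv. apply Rle_ge, Rmult_le_compat_l. lra. apply Rinv_le_contravar; lra. }
  nra.
Qed.

Theorem proposition18 (alpha t : R) (halpha : 0 < alpha) (ht : 2 * PI < t) :
  let tau := t / (2 * PI) in
  forall s, S_set (Rpower tau alpha) t s ->
    s <= 2 * A_const * (Rpower tau (1/2) + 2 * Rpower tau (alpha - 1/2)).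
Proof.
  intros tau s [Y [[HY0 HYX] Hs]].
  pose proof PI_RGT_0 as Hpi.
  assert (Htau : 1 < tau).
  { unfold tau. apply Rmult_lt_reg_r with (2*PI). lra. unfold Rdiv. rewrite Rmult_assoc, Rinv_l; lra. }
  set (X := Rpower tau alpha) in *.
  assert (HX : 0 < X) by (unfold X, Rpower; apply exp_pos).
  set (r := sqrt tau).
  assert (Hr : 1 < r) by (unfold r; rewrite <- sqrt_1; apply sqrt_lt_1; lra).
  assert (Hrr : r * r = tau) by (unfold r; apply sqrt_sqrt; lra).
  assert (E1 : Rpower tau (1/2) = r) by (unfold r; rewrite <- Rpower_sqrt by lra; f_equal; field).
  assert (E2 : Rpower tau (alpha - 1/2) = X / r).
  { unfold Rminus. rewrite Rpower_plus, Rpower_Ropp. fold X. rewrite E1. reflexivity. }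
  rewrite E1, E2.
  pose proof A_lb as HA.
  rewrite sum_link in Hs. fold tau in Hs.
  set (n0 := (Defs.Zfloor X + 1)%Z) in *.
  set (D := (Defs.Zfloor (X + Y) - Defs.Zfloor X)%Z) in *.
  set (N := Z.to_nat D) in *.
  set (g := fun j => tau * ln (IZR n0 + INR j)) in *.
  assert (HD : (0 <= D)%Z) by (unfold D; pose proof (Zfloor_mono X (X + Y) ltac:(lra)); lia).
  assert (HND : INR N = IZR D) by (unfold N; rewrite INR_IZR_INZ, Z2Nat.id; auto).
  pose proof (Zfloor_spec X) as FX. pose proof (Zfloor_spec (X + Y)) as FXY.
  assert (HDv : IZR D = IZR (Defs.Zfloor (X + Y)) - IZR (Defs.Zfloor X)) by (unfold D; apply minus_IZR).
  assert (Hn0 : IZR n0 = IZR (Defs.Zfloor X) + 1) by (unfold n0; rewrite plus_IZR; auto).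
  assert (HNle : INR N <= Y + 1) by lra.
  assert (Hrange : forall j, (j < N)%nat -> X < IZR n0 + INR j /\ IZR n0 + INR j <= X + Y).
  { intros j Hj. pose proof (pos_INR j). assert (INR (S j) <= INR N) by (apply le_INR; lia).
    rewrite S_INR in H0. lra. }
  assert (Hth : forall j, th g j = tau * (ln (IZR n0 + INR j + 1) - ln (IZR n0 + INR j))).
  { intros j. unfold th, g. rewrite S_INR. replace (IZR n0 + (INR j + 1)) with (IZR n0 + INR j + 1) by ring. ring. }
  assert (HRpos : 0 <= 2 * A_const * (r + 2 * (X / r))).
  { assert (0 <= X / r) by (apply Rdiv_le_0_compat; lra). nra. }
  destruct (Nat.eq_dec N 0) as [HN0|HN0].
  { rewrite Hs. rewrite HN0. cbn. rewrite Cmod_0. auto. }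
  destruct (Rlt_dec X (1.5 * r)) as [Hsmall|Hbig].
  { rewrite Hs. eapply Rle_trans. apply Ssum_triv.
    assert (0 <= X / r) by (apply Rdiv_le_0_compat; lra). nra. }
  apply Rnot_lt_le in Hbig.
  set (lam := tau / (4 * X * X)).
  assert (Hlam : 0 < lam) by (unfold lam; apply Rdiv_lt_0_compat; nra).
  set (u := X / r). set (v := r / X).
  assert (Huv : u * v = 1) by (unfold u, v; field; lra).
  assert (Hu : 1.5 <= u) by (unfold u; apply Rmult_le_reg_r with r; [lra|]; unfold Rdiv; rewrite Rmult_assoc, Rinv_l; lra).
  assert (Hv : 0 < v <= 2/3).
  { split. unfold v; apply Rdiv_lt_0_compat; lra. nra. }
  set (d := 0.3 * v).
  assert (Hd : 0 < d <= 0.2) by (unfold d; lra).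
  assert (Hd' : 0 < d <= 1/2) by lra.
  assert (Hdec : forall i, (S i < N)%nat -> th g i - th g (S i) >= lam).
  { intros i Hi. rewrite (Hth i), (Hth (S i)). rewrite S_INR.
    destruct (Hrange i ltac:(lia)) as [Ha Hb]. destruct (Hrange (S i) ltac:(lia)) as [Hc He].
    rewrite S_INR in He.
    set (n := IZR n0 + INR i) in *.
    replace (IZR n0 + (INR i + 1) + 1) with (n + 2) by (unfold n; ring).
    replace (IZR n0 + (INR i + 1)) with (n + 1) by (unfold n; ring).
    pose proof (ln_diff2 n ltac:(lra)).
    assert (Hn1 : n + 1 <= 2 * X) by (unfold n; lra).
    assert (Hn2 : 0 < n) by lra.
    assert (lam <= tau * (1 / ((n + 1) * (n + 1)))).
    { unfold lam. unfold Rdiv. rewrite Rmult_1_l. apply Rmult_le_compat_l. lra.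
      apply Rinv_le_contravar. nra. nra. }
    assert (tau * (1 / ((n + 1) * (n + 1))) <= tau * (2 * ln (n + 1) - ln n - ln (n + 2))).
    { apply Rmult_le_compat_l; lra. }
    apply Rle_ge. replace (tau * (ln (n + 1) - ln n) - tau * (ln (n + 2) - ln (n + 1)))
      with (tau * (2 * ln (n + 1) - ln n - ln (n + 2))) by ring. lra. }
  pose proof (main_bound g N lam d Hlam Hd' Hdec N ltac:(lia) ltac:(lia)) as MB.
  pose proof (Bc_pos lam d Hlam Hd') as HBp.
  assert (HB : Bc lam d <= 4.9 * u + 1).
  { unfold Bc. pose proof (sin_bound_d d Hd).
    assert (2 * d / lam = 24/10 * u).
    { unfold d, lam, u, v. rewrite <- Hrr. replace 0.3 with (3/10) by lra. field. lra. }
    assert (0.75 / d = 25/10 * u).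
    { unfold d, u, v. replace 0.3 with (3/10) by lra. replace 0.75 with (75/100) by lra. field. lra. }
    lra. }
  assert (HP : th g 0 - th g (N - 1) <= r * v / 2 + v * v / 4).
  { rewrite (Hth 0%nat), (Hth (N-1)%nat).
    destruct (Hrange 0%nat ltac:(lia)) as [Ha _]. destruct (Hrange (N-1)%nat ltac:(lia)) as [Hc He].
    simpl INR in *. rewrite Rplus_0_r in *.
    pose proof (ln_diff_ub (IZR n0) ltac:(lra)).
    pose proof (ln_diff_lb (IZR n0 + INR (N - 1)) ltac:(lra)).
    assert (tau * (1 / IZR n0) <= tau / X).
    { unfold Rdiv. rewrite Rmult_1_l. apply Rmult_le_compat_l. lra. apply Rinv_le_contravar; lra. }
    assert (tau / (2 * X + 1) <= tau * (1 / (IZR n0 + INR (N - 1) + 1))).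
    { unfold Rdiv. rewrite Rmult_1_l. apply Rmult_le_compat_l. lra. apply Rinv_le_contravar; lra. }
    assert (tau / X - tau / (2 * X + 1) <= r * v / 2 + v * v / 4).
    { assert (tau / X - tau / (2 * X + 1) - (tau / (2 * X) + tau / (4 * X * X)) = - tau / (4 * X * X * (2 * X + 1))).
      { field. lra. }
      assert (0 <= tau / (4 * X * X * (2 * X + 1))) by (apply Rdiv_le_0_compat; nra).
      assert (tau / (2 * X) = r * v / 2) by (unfold v; rewrite <- Hrr; field; lra).
      assert (tau / (4 * X * X) = v * v / 4) by (unfold v; rewrite <- Hrr; field; lra).
      lra. }
    assert (tau * (ln (IZR n0 + 1) - ln (IZR n0)) <= tau * (1 / IZR n0)) by (apply Rmult_le_compat_l; lra).
    assert (tau * (1 / (IZR n0 + INR (N - 1) + 1)) <= tau * (ln (IZR n0 + INR (N - 1) + 1) - ln (IZR n0 + INR (N - 1)))) by (apply Rmult_le_compat_l; lra).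
    lra. }
  assert (Hmono : th g (N - 1) <= th g 0) by (apply (th_mono g N lam Hlam Hdec); lia).
  rewrite Hs. eapply Rle_trans. apply MB.
  apply Rle_trans with ((r * v / 2 + v * v / 4 + 2) * (4.9 * u + 1)).
  { apply Rmult_le_compat; lra. }
  fold u.
  replace 4.9 with (49/10) by lra.
  assert (E : (r*v/2 + v*v/4 + 2) * (49/10*u + 1) = 49/20 * r * (u*v) + r*v/2 + 49/40 * v * (u*v) + v*v/4 + 98/10*u + 2) by field.
  rewrite E, Huv.
  assert (r * v <= r * (2/3)) by (apply Rmult_le_compat_l; lra).
  assert (v * v <= 4/9) by nra.
  assert (0 <= r + 2 * u) by lra.
  apply Rle_trans with (5.4 * (r + 2 * u)). lra.
  apply Rmult_le_compat_r; lra.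
Qed.
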